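(* Let $G$ be a finite group and $K$ a quadratic extension of $\mathbb{Q}$ with ring of integers $\mathfrak{o}_K$. If $M_2(K)$ is a Wedderburn component of the group algebra $K[G]$, then $\mathbb{Z}^2$ embeds in $\mathcal{U}_1(\mathfrak{o}_K[G])$; in particular $\mathcal{U}_1(\mathfrak{o}_K[G])$ is not hyperbolic.
   Context: $\mathcal{U}_1(\mathfrak{o}_K[G])$ is the group of units of augmentation $1$ in the group ring $\mathfrak{o}_K[G]$. A Wedderburn component of the semisimple algebra $K[G]$ is a simple direct factor in its Wedderburn decomposition. Hyperbolic means Gromov-hyperbolic. *)

(* Defs.v *)
From HB Require Import structures.
From mathcomp Require Import all_boot all_order all_algebra all_fingroup all_field.
Set Implicit Arguments. Unset Strict Implicit. Unset Printing Implicit Defensive.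
Import GRing.Theory.
Local Open Scope ring_scope.

Section GroupRing.
Variables (R : nzRingType) (gT : finGroupType).

Definition group_ring := {ffun gT -> R^o}.
HB.instance Definition _ := GRing.Lmodule.on group_ring.

Definition gr_one : group_ring := [ffun x => (x == 1%g)%:R].
Definition gr_mul (a b : group_ring) : group_ring :=
  [ffun x => \sum_(y : gT) a y * b (y^-1 * x)%g].

Lemma gr_mulA : associative gr_mul.
Proof.
move=> a b c; apply/ffunP=> x; rewrite /gr_mul !ffunE; apply: esym.
under eq_bigr => y _ do rewrite ffunE mulr_suml.
rewrite exchange_big /=.
apply: eq_bigr => z _.
rewrite ffunE mulr_sumr.
rewrite (reindex_inj (mulgI z)) /=.
apply: eq_bigr => w _.
by rewrite mulKg mulrA invMg mulgA.
Qed.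

Lemma gr_mul1r : left_id gr_one gr_mul.
Proof.
move=> b; apply/ffunP=> x; rewrite ffunE (bigD1 1%g) //= !ffunE eqxx mul1r.
rewrite invg1 mul1g big1 ?addr0 // => y /negbTE ny1.
by rewrite ffunE ny1 mul0r.
Qed.

Lemma gr_mulr1 : right_id gr_one gr_mul.
Proof.
move=> a; apply/ffunP=> x; rewrite ffunE (bigD1 x) //= !ffunE mulVg eqxx mulr1.
rewrite big1 ?addr0 // => y nyx; rewrite ffunE.
have -> : (y^-1 * x == 1)%g = false.
  by apply/negbTE; apply: contra nyx => /eqP h; apply/eqP; rewrite -[x](mulKVg y) h mulg1.
by rewrite mulr0.
Qed.

Lemma gr_mulDl : left_distributive gr_mul +%R.
Proof.
move=> a b c; apply/ffunP=> x; rewrite !ffunE -big_split /=.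
by apply: eq_bigr => y _; rewrite ffunE mulrDl.
Qed.

Lemma gr_mulDr : right_distributive gr_mul +%R.
Proof.
move=> a b c; apply/ffunP=> x; rewrite !ffunE -big_split /=.
by apply: eq_bigr => y _; rewrite ffunE mulrDr.
Qed.

Lemma gr_one_neq0 : gr_one != 0.
Proof.
apply/eqP => /ffunP /(_ 1%g); rewrite !ffunE eqxx => /eqP.
by rewrite oner_eq0.
Qed.

HB.instance Definition _ := GRing.Zmodule_isNzRing.Build group_ring
  gr_mulA gr_mul1r gr_mulr1 gr_mulDl gr_mulDr gr_one_neq0.

Lemma gr_scaleAl (k : R) (u v : group_ring) : k *: (u * v) = (k *: u) * v.
Proof.
apply/ffunP=> x; rewrite !ffunE scaler_sumr.
by apply: eq_bigr => y _; rewrite !ffunE scalerAl.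
Qed.

HB.instance Definition _ := GRing.Lmodule_isLalgebra.Build R group_ring gr_scaleAl.

Definition augmentation (u : group_ring) : R := \sum_(g : gT) u g.

End GroupRing.

Definition algebraic_integer (K : fieldExtType rat) (x : K) : Prop :=
  exists p : {poly int}, p \is monic /\ root (map_poly (fun z : int => z%:~R : K) p) x.

Definition in_OK_G (K : fieldExtType rat) (gT : finGroupType)
  (u : group_ring K gT) : Prop := forall g : gT, algebraic_integer (u g).

Definition U1 (K : fieldExtType rat) (gT : finGroupType)
  (u : group_ring K gT) : Prop :=
  [/\ in_OK_G u,
      exists2 v : group_ring K gT, in_OK_G v & u * v = 1 /\ v * u = 1
    & augmentation u = 1].

Definition is_Wedderburn_component_Mn (K : fieldType) (A : lalgType K) (n : nat) : Prop :=
  exists (B : lalgType K) (f : A -> ('M[K]_n.+1 * B)%type),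
    [/\ bijective f, linear f & monoid_morphism f].

Definition Z2_embeds_in (A : nzRingType) (H : A -> Prop) : Prop :=
  exists phi : (int * int)%type -> A,
    [/\ injective phi, forall x, H (phi x)
      & forall x y, phi (x + y) = phi x * phi y].

(* Gromov products are doubled to stay integral.                       *)
Definition word_in (A : nzRingType) (S : seq A) (w : seq A) : bool :=
  all (fun s => s \in S) w.

Definition word_dist (A : nzRingType) (S : seq A) (x y : A) (n : nat) : Prop :=
  (exists2 w, word_in S w & size w = n /\ x * \prod_(s <- w) s = y) /\
  (forall w, word_in S w -> x * \prod_(s <- w) s = y -> (n <= size w)%N).

Definition hyperbolic (A : nzRingType) (H : A -> Prop) : Prop :=
  exists S : seq A,
    [/\ forall s, s \in S -> H s,
        forall s, s \in S -> exists2 t, t \in S & s * t = 1 /\ t * s = 1,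
        forall h, H h -> exists2 w, word_in S w & \prod_(s <- w) s = h
      & exists delta : nat,
        forall (x y z w : A) (dxy dyz dxz dwx dwy dwz : nat),
          H x -> H y -> H z -> H w ->
          word_dist S x y dxy -> word_dist S y z dyz -> word_dist S x z dxz ->
          word_dist S w x dwx -> word_dist S w y dwy -> word_dist S w z dwz ->
          let gp_xz := (dwx%:Z + dwz%:Z - dxz%:Z)%R in
          let gp_xy := (dwx%:Z + dwy%:Z - dxy%:Z)%R in
          let gp_yz := (dwy%:Z + dwz%:Z - dyz%:Z)%R in
          (Num.min gp_xy gp_yz - (2 * delta)%:Z <= gp_xz)%R].

(* Main.v *)
Require Import Defs.
From HB Require Import structures.
From mathcomp Require Import all_boot all_order all_algebra all_fingroup all_field.
From mathcomp Require Import zify ring.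
From Stdlib Require Import Classical ClassicalEpsilon.
Set Implicit Arguments. Unset Strict Implicit. Unset Printing Implicit Defensive.
Import Order.TTheory GRing.Theory Num.Theory.
Local Open Scope ring_scope.

Lemma min_exists (P : nat -> Prop) :
  (exists n, P n) -> exists n, P n /\ forall m, P m -> (n <= m)%N.
Proof.
case=> n; elim/ltn_ind: n => n IH Pn.
case: (classic (exists m, (m < n)%N /\ P m)) => [[m [lt Pm]]|nex].
  exact: IH lt Pm.
exists n; split=> // m Pm; rewrite leqNgt; apply/negP => lt; apply: nex; by exists m.
Qed.

Section Geo.
Variables (A : nzRingType) (H : A -> Prop) (S : seq A).
Hypothesis Hmul : forall x y, H x -> H y -> H (x * y).
Hypothesis H1 : H 1.
Hypothesis Hinv : forall x, H x -> exists2 y, H y & x * y = 1 /\ y * x = 1.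
Hypothesis hS : forall s, s \in S -> H s.
Hypothesis hSinv : forall s, s \in S -> exists2 t, t \in S & s * t = 1 /\ t * s = 1.
Hypothesis hgen : forall h, H h -> exists2 w, word_in S w & \prod_(s <- w) s = h.

Definition prodw (w : seq A) := \prod_(s <- w) s.

Lemma prodw_cons s w : prodw (s :: w) = s * prodw w.
Proof. by rewrite /prodw big_cons. Qed.
Lemma prodw_nil : prodw [::] = 1.
Proof. by rewrite /prodw big_nil. Qed.
Lemma prodw_cat w1 w2 : prodw (w1 ++ w2) = prodw w1 * prodw w2.
Proof. by rewrite /prodw big_cat. Qed.
Lemma prodw_rcons w s : prodw (rcons w s) = prodw w * s.
Proof. by rewrite -cats1 prodw_cat /prodw big_seq1. Qed.
Lemma word_in_cat w1 w2 : word_in S (w1 ++ w2) = word_in S w1 && word_in S w2.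
Proof. by rewrite /word_in all_cat. Qed.

Lemma H_prodw w : word_in S w -> H (prodw w).
Proof.
elim: w => [|s w IH] /=; first by rewrite prodw_nil.
rewrite /word_in /= => /andP [hs hw]; rewrite prodw_cons; apply: Hmul; first exact: hS.
exact: IH.
Qed.

Definition ginv_ex (x : A) : exists y, H x -> [/\ H y, x * y = 1 & y * x = 1].
Proof.
case: (classic (H x)) => hx.
  by have [y hy [e1 e2]] := Hinv hx; exists y.
by exists 0.
Qed.
Definition ginv x := proj1_sig (constructive_indefinite_description _ (ginv_ex x)).
Lemma ginvP x : H x -> [/\ H (ginv x), x * ginv x = 1 & ginv x * x = 1].
Proof. exact: (proj2_sig (constructive_indefinite_description _ (ginv_ex x))). Qed.

Definition reach (x y : A) (n : nat) :=
  exists2 w, word_in S w & size w = n /\ x * prodw w = y.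

Lemma reach_ex x y : H x -> H y -> exists n, reach x y n.
Proof.
move=> hx hy; have [hi e1 e2] := ginvP hx.
have [w hw ew] := hgen (Hmul hi hy).
exists (size w); exists w => //; split=> //.
by rewrite /prodw ew mulrA e1 mul1r.
Qed.

Lemma wd_ex x y : H x -> H y -> exists n, word_dist S x y n.
Proof.
move=> hx hy; have [n [[w hw [sw ew]] hmin]] := min_exists (reach_ex hx hy).
exists n; split; first by exists w.
move=> w' hw' ew'; apply: hmin; by exists w'.
Qed.

Definition dist (x y : A) : nat :=
  match excluded_middle_informative (exists n, word_dist S x y n) with
  | left h => proj1_sig (constructive_indefinite_description _ h)
  | right _ => 0%N end.

Lemma distP x y : H x -> H y -> word_dist S x y (dist x y).
Proof.
move=> hx hy; rewrite /dist; case: excluded_middle_informative => [h|h].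
  exact: (proj2_sig (constructive_indefinite_description _ h)).
by case: h; apply: wd_ex.
Qed.

Lemma dist_le x y w : H x -> H y -> word_in S w -> x * prodw w = y -> (dist x y <= size w)%N.
Proof. by move=> hx hy hw ew; have [_ h] := distP hx hy; apply: h. Qed.

Lemma dist_word x y : H x -> H y ->
  exists2 w, word_in S w & size w = dist x y /\ x * prodw w = y.
Proof. by move=> hx hy; have [h _] := distP hx hy. Qed.

Lemma dist_tri x y z : H x -> H y -> H z -> (dist x z <= dist x y + dist y z)%N.
Proof.
move=> hx hy hz.
have [w1 hw1 [s1 e1]] := dist_word hx hy.
have [w2 hw2 [s2 e2]] := dist_word hy hz.
rewrite -s1 -s2 -size_cat; apply: dist_le => //.
  by rewrite word_in_cat hw1.
by rewrite prodw_cat mulrA e1.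
Qed.

Lemma dist_xx x : H x -> dist x x = 0%N.
Proof.
move=> hx; apply/eqP; rewrite -leqn0 -[0%N]/(size ([::] : seq A)).
by apply: dist_le => //; rewrite prodw_nil mulr1.
Qed.

Lemma dist_linv c x y : H c -> H x -> H y -> dist (c * x) (c * y) = dist x y.
Proof.
move=> hc hx hy; have [hi e1 e2] := ginvP hc.
apply/eqP; rewrite eqn_leq; apply/andP; split.
  have [w hw [sw ew]] := dist_word hx hy.
  rewrite -sw; apply: dist_le => //; try exact: Hmul.
  by rewrite -mulrA ew.
have [w hw [sw ew]] := dist_word (Hmul hc hx) (Hmul hc hy).
rewrite -sw; apply: dist_le => //.
by rewrite -[x]mul1r -e2 -!mulrA (mulrA c) ew mulrA e2 mul1r.
Qed.

Definition invS_ex (s : A) : exists t, s \in S -> [/\ t \in S, s * t = 1 & t * s = 1].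
Proof.
case: (boolP (s \in S)) => hs.
  by have [t ht [e1 e2]] := hSinv hs; exists t.
by exists 0.
Qed.
Definition invS s := proj1_sig (constructive_indefinite_description _ (invS_ex s)).
Lemma invSP s : s \in S -> [/\ invS s \in S, s * invS s = 1 & invS s * s = 1].
Proof. exact: (proj2_sig (constructive_indefinite_description _ (invS_ex s))). Qed.

Lemma revw_prop w : word_in S w ->
  word_in S (rev (map invS w)) /\ prodw w * prodw (rev (map invS w)) = 1.
Proof.
elim: w => [|s w IH]; first by rewrite /= prodw_nil mulr1.
move=> hsw; have /andP [hs hw] : (s \in S) && word_in S w := hsw.
have [IH1 IH2] := IH hw; have [i1 i2 i3] := invSP hs.
rewrite rev_cons -cats1; split.
  by rewrite word_in_cat IH1 /word_in /= i1.
by rewrite prodw_cons prodw_cat /prodw big_seq1 -/(prodw _) mulrA -(mulrA s) IH2 mulr1 i2.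
Qed.

Lemma dist_sym x y : H x -> H y -> dist x y = dist y x.
Proof.
suff h : forall x y, H x -> H y -> (dist y x <= dist x y)%N.
  by move=> hx hy; apply/eqP; rewrite eqn_leq !h.
move=> {}x {}y hx hy; have [w hw [sw ew]] := dist_word hx hy.
have [h1 h2] := revw_prop hw.
rewrite -sw -(size_map invS) -size_rev; apply: dist_le => //.
by rewrite -ew -mulrA h2 mulr1.
Qed.

Fixpoint ball (R : nat) : seq A :=
  if R is R'.+1 then ball R' ++ [seq x * s | x <- ball R', s <- S] else [:: 1].

Lemma size_ball R : size (ball R) = ((size S).+1 ^ R)%N.
Proof.
elim: R => [|R IH] //=; rewrite size_cat size_allpairs IH expnS; lia.
Qed.

Lemma ball_word R w : word_in S w -> (size w <= R)%N -> prodw w \in ball R.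
Proof.
elim: R w => [|R IH] w.
  by case: w => // _ _; rewrite prodw_nil mem_seq1.
case/lastP: w => [|w s].
  by move=> _ _; rewrite /= mem_cat; apply/orP; left; apply: IH.
rewrite /word_in all_rcons size_rcons ltnS => /andP [hs hw] hsz.
rewrite prodw_rcons /= mem_cat; apply/orP; right.
by apply: allpairs_f => //; apply: IH.
Qed.

Lemma dist_ball R x y : H x -> H y -> (dist x y <= R)%N ->
  exists2 r, r \in ball R & x * r = y.
Proof.
move=> hx hy hd; have [w hw [sw ew]] := dist_word hx hy.
by exists (prodw w) => //; apply: ball_word; rewrite // sw.
Qed.

Variable delta : nat.
Hypothesis h4 : forall (x y z w : A) (dxy dyz dxz dwx dwy dwz : nat),
          H x -> H y -> H z -> H w ->
          word_dist S x y dxy -> word_dist S y z dyz -> word_dist S x z dxz ->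
          word_dist S w x dwx -> word_dist S w y dwy -> word_dist S w z dwz ->
          let gp_xz := (dwx%:Z + dwz%:Z - dxz%:Z)%R in
          let gp_xy := (dwx%:Z + dwy%:Z - dxy%:Z)%R in
          let gp_yz := (dwy%:Z + dwz%:Z - dyz%:Z)%R in
          (Num.min gp_xy gp_yz - (2 * delta)%:Z <= gp_xz)%R.

Lemma four x y z w : H x -> H y -> H z -> H w ->
  (dist w x + dist w y + dist x z <= dist x y + dist w x + dist w z + 2 * delta)%N \/
  (dist w y + dist w z + dist x z <= dist y z + dist w x + dist w z + 2 * delta)%N.
Proof.
move=> hx hy hz hw.
have := h4 hx hy hz hw (distP hx hy) (distP hy hz) (distP hx hz) (distP hw hx)
  (distP hw hy) (distP hw hz).
rewrite /= lerBlDr ge_min => /orP [h|h]; [left|right]; lia.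
Qed.


Variable phi : (int * int)%type -> A.
Hypothesis phi_inj : injective phi.
Hypothesis Hphi : forall x, H (phi x).
Hypothesis phiD : forall x y, phi (x + y) = phi x * phi y.

Lemma phi0 : phi 0 = 1.
Proof.
have [hi e1 e2] := ginvP (Hphi 0).
have : phi 0 * phi 0 = phi 0 * 1 by rewrite -phiD addr0 mulr1.
by move/(congr1 (fun z => ginv (phi 0) * z)); rewrite !mulrA e2 !mul1r.
Qed.

Lemma phiC x y : phi x * phi y = phi y * phi x.
Proof. by rewrite -!phiD addrC. Qed.

Definition pw (i j : nat) := phi (i%:Z, j%:Z).

Lemma pwSl i j : pw i.+1 j = pw i j * pw 1 0.
Proof.
rewrite /pw -phiD; change ((i%:Z,j%:Z) + (1%:Z,0%:Z)) with (i%:Z + 1, j%:Z + 0).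
by rewrite addr0 intS addrC.
Qed.
Lemma pwSr i j : pw i j.+1 = pw i j * pw 0 1.
Proof.
rewrite /pw -phiD; change ((i%:Z,j%:Z) + (0%:Z,1%:Z)) with (i%:Z + 0, j%:Z + 1).
by rewrite addr0 intS addrC.
Qed.

Lemma dist_mul x y : H x -> H y -> (dist 1 (x * y) <= dist 1 x + dist 1 y)%N.
Proof.
move=> hx hy; have := dist_tri H1 hx (Hmul hx hy).
have e : dist x (x * y) = dist 1 y by rewrite -{1}[x]mulr1 dist_linv.
by rewrite e.
Qed.

Lemma Hpw i j : H (pw i j). Proof. exact: Hphi. Qed.

Lemma len_pw i j :
  (dist 1 (pw i j) <= i * dist 1 (pw 1 0) + j * dist 1 (pw 0 1))%N.
Proof.
elim: i => [|i IH].
  elim: j => [|j IH]; first by rewrite /pw phi0 dist_xx.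
  rewrite pwSr; apply: leq_trans (dist_mul (Hpw _ _) (Hpw _ _)) _; nia.
rewrite pwSl; apply: leq_trans (dist_mul (Hpw _ _) (Hpw _ _)) _; nia.
Qed.

Lemma noZ2 : False.
Proof.
set la := dist 1 (pw 1 0); set lb := dist 1 (pw 0 1); set l := (la + lb)%N.
set R2 := (4 * delta + 1)%N.
set beta := size (ball R2).
set N := (2 * l * beta + beta + 1)%N.
set Lam := (N * l)%N.
have [n hn] : exists n, (2 * Lam + 4 * delta + 2 <= dist 1 (pw n 0))%N.
  apply: NNPP => hno.
  set R0 := (2 * Lam + 4 * delta + 1)%N.
  have hall : forall k, (dist 1 (pw k 0) <= R0)%N.
    move=> k; rewrite leqNgt; apply/negP => hk; apply: hno; exists k; lia.
  suff: ((size (ball R0)).+1 <= size (ball R0))%N by rewrite ltnn.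
  rewrite -{1}(size_iota 0 (size (ball R0)).+1) -(size_map (fun k => pw k 0)).
  apply: uniq_leq_size.
    rewrite map_inj_uniq ?iota_uniq // => k k' /phi_inj [].
    by case.
  move=> x /mapP [k _ ->]; have [r hr e] := dist_ball H1 (Hpw k 0) (hall k).
  by rewrite -e mul1r.
set g := pw n 0; set Aa := dist 1 g.
have Hg : H g by apply: Hphi.
have [w0 hw0 [sw0 ew0]] := dist_word H1 Hg.
set pt := fun t => prodw (take t w0).
have hwt : forall t, word_in S (take t w0).
  by move=> t; move: hw0; rewrite /word_in -{1}(cat_take_drop t w0) all_cat => /andP [].
have hwd : forall t, word_in S (drop t w0).
  by move=> t; move: hw0; rewrite /word_in -{1}(cat_take_drop t w0) all_cat => /andP [].
have Hpt : forall t, H (pt t) by move=> t; apply: H_prodw.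
have dpt : forall t, (t <= Aa)%N -> dist 1 (pt t) = t /\ dist (pt t) g = (Aa - t)%N.
  move=> t ht.
  have a1 : (dist 1 (pt t) <= t)%N.
    have := dist_le H1 (Hpt t) (hwt t) (mul1r _); rewrite size_takel //; lia.
  have a2 : (dist (pt t) g <= Aa - t)%N.
    have := dist_le (Hpt t) Hg (hwd t); rewrite size_drop sw0; apply.
    by rewrite /pt -prodw_cat cat_take_drop -ew0 mul1r.
  have a3 := dist_tri H1 (Hpt t) Hg.
  lia.
set t0 := Aa./2.
have ht0 : (2 * t0 <= Aa <= 2 * t0 + 1)%N.
  by have := odd_double_half Aa; rewrite -/t0 -mul2n; case: odd => /= e; lia.
set p := pt t0.
have [dp1 dpg] := dpt t0 ltac:(lia).
set cand := [seq p * r * ginv (pt s) | s <- iota (t0 - Lam) (2 * Lam + 1), r <- ball R2].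
have key : forall i j, (i < N)%N -> (j < N)%N -> pw i j \in cand.
  move=> i j hi hj.
  set c := pw i j; have hc : H c by apply: Hphi.
  have hm : (dist 1 c <= Lam)%N.
    apply: leq_trans (len_pw i j) _; rewrite /Lam /l -/la -/lb; nia.
  have comm : c * g = g * c by apply: phiC.
  have Hcg : H (c * g) by apply: Hmul.
  have f3 : dist c (c * g) = Aa by rewrite -{1}[c]mulr1 dist_linv.
  have f4 : dist g (c * g) = dist 1 c by rewrite comm -{1}[g]mulr1 dist_linv.
  have Hp : H p by apply: Hpt.
  have t1 := dist_tri H1 hc Hp.
  have t2 := dist_tri hc H1 Hp.
  have t3 := dist_tri Hp Hcg Hg.
  have t4 := dist_tri Hp Hg Hcg.
  have t5 := dist_tri Hp hc Hcg.
  have t6 := dist_tri hc Hcg Hp.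
  have s1 := dist_sym H1 Hp.
  have s2 := dist_sym H1 hc.
  have s3 := dist_sym hc Hp.
  have s4 := dist_sym Hg Hcg.
  have s5 := dist_sym Hp Hcg.
  have s6 := dist_sym H1 Hg.
  set G := (dist c p + Aa - dist p (c * g))%N.
  set s := G./2.
  have hs : (2 * s <= G <= 2 * s + 1)%N.
    by have := odd_double_half G; rewrite -/s -mul2n; case: odd => /= e; lia.
  have hsA : (s <= Aa)%N by lia.
  have [dps1 dpsg] := dpt s hsA.
  set V := c * pt s.
  have HV : H V by apply: Hmul.
  have fV1 : dist c V = s by rewrite /V -{1}[c]mulr1 dist_linv.
  have fV2 : dist V (c * g) = (Aa - s)%N by rewrite /V dist_linv.
  have s7 := dist_sym HV Hcg.
  have q1 := four H1 hc Hg Hp.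
  have q2 := four hc Hcg Hg Hp.
  have q3 := four Hp Hcg HV hc.
  have eAa : dist 1 g = Aa by [].
  have hA : (2 * Lam + 4 * delta + 2 <= Aa)%N by [].
  move: dp1 dpg; rewrite -/p => dp1 dpg.
  have hpV : (dist p V <= R2)%N by rewrite /R2; lia.
  have hsr : (t0 - Lam <= s < t0 - Lam + (2 * Lam + 1))%N by lia.
  have [r hr er] := dist_ball Hp HV hpV.
  have [_ e1 _] := ginvP (Hpt s).
  have -> : c = p * r * ginv (pt s) by rewrite er /V -mulrA e1 mulr1.
  by apply: allpairs_f => //; rewrite mem_iota.
have hu : uniq [seq pw i j | i <- iota 0 N, j <- iota 0 N].
  apply: allpairs_uniq; rewrite ?iota_uniq //.
  by move=> [i j] [i' j'] _ _ /= /phi_inj [] [] -> [] ->.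
have hsub : {subset [seq pw i j | i <- iota 0 N, j <- iota 0 N] <= cand}.
  move=> x /allpairsP [[i j] [/= hi hj ->]].
  by apply: key; move: hi hj; rewrite !mem_iota.
have := uniq_leq_size hu hsub.
rewrite !size_allpairs !size_iota -/beta.
rewrite /Lam /N; nia.
Qed.

End Geo.
Section Quad.
Variable K : fieldExtType rat.
Hypothesis hK : \dim (fullv : {vspace K}) = 2%N.

Lemma aiE (x : K) : algebraic_integer x <-> integralOver (intr : int -> K) x.
Proof. split=> [[p [h1 h2]]|[p h1 h2]]; by exists p. Qed.
Lemma ai_add (x y : K) : algebraic_integer x -> algebraic_integer y -> algebraic_integer (x + y).
Proof. move=> *; apply/aiE; apply: (@integral_add _ _ (intr : int -> K)); exact/aiE. Qed.
Lemma ai_mul (x y : K) : algebraic_integer x -> algebraic_integer y -> algebraic_integer (x * y).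
Proof. move=> *; apply/aiE; apply: (@integral_mul _ _ (intr : int -> K)); exact/aiE. Qed.
Lemma ai_opp (x : K) : algebraic_integer x -> algebraic_integer (- x).
Proof. move=> *; apply/aiE; apply: (@integral_opp _ _ (intr : int -> K)); exact/aiE. Qed.
Lemma ai_int (z : int) : algebraic_integer (z%:~R : K).
Proof. apply/aiE; exact: (@integral_id _ _ (intr : int -> K)). Qed.
Lemma ai_nat (n : nat) : algebraic_integer (n%:R : K).
Proof. have := ai_int n%:Z; by rewrite pmulrn. Qed.

Lemma exists_irr : exists y : K, y \notin <[1]>%VS.
Proof.
apply: NNPP => h.
have : (fullv <= <[1 : K]>)%VS.
  apply/subvP => y _; apply: NNPP => hy; apply: h; exists y; exact/negP.
move/dimvS; rewrite hK dim_vline oner_neq0 //.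
Qed.

Lemma quad_rel (y : K) : exists p q : rat, y * y = p%:A * y + q%:A.
Proof.
case: (boolP (y \in <[1]>%VS)) => hy.
  have [r ->] := vlineP _ _ hy.
  by exists r, 0; rewrite scale0r addr0 mulr_algl.
have hsum : (<[1]> + <[y]> = fullv)%VS.
  apply/eqP; rewrite eqEdim subvf /= hK leqNgt; apply/negP => hlt.
  have := geq_leqif (dimv_leqif_eq (addvSl <[1 : K]> <[y]>)).
  rewrite dim_vline oner_neq0 /= => e0.
  have /eqP e : (<[1 : K]> == <[1]> + <[y]>)%VS by rewrite -e0 -ltnS.
  move: hy; rewrite e; move/negP; apply; apply: subv_trans (addvSr _ _).
  exact: memv_line.
have : y * y \in (<[1]> + <[y]>)%VS by rewrite hsum memvf.
case/memv_addP => u /vlineP [a ->] [v /vlineP [b ->] ->].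
by exists b, a; rewrite addrC mulr_algl.
Qed.


Lemma ai_quad (z : K) (ai bi : int) : z * z = ai%:~R * z + bi%:~R -> algebraic_integer z.
Proof.
move=> e; exists ('X^2 - (ai%:P * 'X + bi%:P)); split.
  rewrite monicE lead_coefDl ?lead_coefXn // size_polyXn size_opp size_MXaddC.
  by case: ifP => // _; rewrite size_polyC; case: (ai != 0).
rewrite /root rmorphB /= rmorphD /= !rmorphM /= !map_polyX !map_polyC /= !hornerE.
by rewrite e subrr.
Qed.

Lemma scale_int (y : K) : exists d : nat, (0 < d)%N /\ algebraic_integer (d%:R * y).
Proof.
have [p [q e]] := quad_rel y.
set dp := denq p; set dq := denq q.
have hD : (0 < dp * dq)%R by rewrite mulr_gt0 ?denq_gt0.
exists (absz (dp * dq)); split; first by rewrite absz_gt0 gt_eqF.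
have hd : ((absz (dp * dq))%:R : K) = in_alg K (dp * dq)%:~R.
  by rewrite rmorph_int pmulrn gez0_abs // ltW.
rewrite hd.
apply: (@ai_quad _ (dq * numq p) (dp * dp * dq * numq q)).
set D : rat := (dp * dq)%:~R.
have eA : ((dq * numq p)%:~R : K) = in_alg K (dq * numq p)%:~R by rewrite rmorph_int.
have eB : ((dp * dp * dq * numq q)%:~R : K) = in_alg K (dp * dp * dq * numq q)%:~R
  by rewrite rmorph_int.
rewrite eA eB.
have h1 : D * D * p = (dq * numq p)%:~R * D.
  by rewrite /D !intrM numqE -/dp; ring.
have h2 : D * D * q = (dp * dp * dq * numq q)%:~R.
  by rewrite /D !intrM numqE -/dq; ring.
transitivity (in_alg K (D * D) * (y * y)); first by rewrite rmorphM; ring.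
rewrite e.
have -> : in_alg K (dq * numq p)%:~R * (in_alg K D * y) = in_alg K ((dq * numq p)%:~R * D) * y.
  by rewrite rmorphM; ring.
rewrite -h1 -h2 !rmorphM /=; ring.
Qed.

End Quad.

Section GR.
Variables (K : fieldExtType rat) (gT : finGroupType).
Local Notation R := (group_ring K gT).

Lemma grmulE (u v : R) x : (u * v) x = \sum_(y : gT) u y * v (y^-1 * x)%g.
Proof. by rewrite /= ffunE. Qed.
Lemma groneE x : (1 : R) x = (x == 1%g)%:R.
Proof. by rewrite /= ffunE. Qed.
Lemma graddE (u v : R) x : (u + v) x = u x + v x.
Proof. by rewrite ffunE. Qed.
Lemma grscaleE k (u : R) x : (k *: u) x = k * u x.
Proof. by rewrite ffunE. Qed.
Lemma grzeroE x : (0 : R) x = 0.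
Proof. by rewrite ffunE. Qed.
Lemma groppE (u : R) x : (- u) x = - u x.
Proof. by rewrite ffunE. Qed.

Lemma aug_mul (u v : R) : augmentation (u * v) = augmentation u * augmentation v.
Proof.
rewrite /augmentation mulr_suml.
under eq_bigr => x _ do rewrite grmulE.
rewrite exchange_big /=; apply: eq_bigr => y _.
rewrite -mulr_sumr; congr (_ * _).
by rewrite (reindex_inj (mulgI y)) /=; apply: eq_bigr => x _; rewrite mulKg.
Qed.

Lemma aug_one : augmentation (1 : R) = 1.
Proof.
rewrite /augmentation (bigD1 1%g) //= groneE eqxx big1 ?addr0 // => x hx.
by rewrite groneE (negbTE hx).
Qed.

Lemma aug_add (u v : R) : augmentation (u + v) = augmentation u + augmentation v.
Proof. by rewrite /augmentation -big_split; apply: eq_bigr => x _; rewrite graddE. Qed.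

Lemma aug_zero : augmentation (0 : R) = 0.
Proof. by rewrite /augmentation big1 // => x _; rewrite grzeroE. Qed.

Lemma okG_add (u v : R) : in_OK_G u -> in_OK_G v -> in_OK_G (u + v).
Proof. by move=> hu hv x; rewrite graddE; apply: ai_add. Qed.
Lemma okG_opp (u : R) : in_OK_G u -> in_OK_G (- u).
Proof. by move=> hu x; rewrite groppE; apply: ai_opp. Qed.
Lemma okG_scale k (u : R) : algebraic_integer k -> in_OK_G u -> in_OK_G (k *: u).
Proof. by move=> hk hu x; rewrite grscaleE; apply: ai_mul. Qed.
Lemma okG_one : in_OK_G (1 : R).
Proof. by move=> x; rewrite groneE; apply: ai_nat. Qed.
Lemma okG_mul (u v : R) : in_OK_G u -> in_OK_G v -> in_OK_G (u * v).
Proof.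
move=> hu hv x; rewrite grmulE.
apply: (big_ind (@algebraic_integer K)).
- by have := ai_nat K 0.
- exact: ai_add.
by move=> y _; apply: ai_mul.
Qed.

Lemma U1_mul (u v : R) : U1 u -> U1 v -> U1 (u * v).
Proof.
case=> hu [u' hu' [e1 e2]] au [hv [v' hv' [f1 f2]] av]; split.
- exact: okG_mul.
- exists (v' * u'); first exact: okG_mul.
  split; first by rewrite -mulrA (mulrA v) f1 mul1r e1.
  by rewrite -mulrA (mulrA u') e2 mul1r f2.
by rewrite aug_mul au av mulr1.
Qed.

Lemma U1_one : U1 (1 : R).
Proof. split; [exact: okG_one | exists 1; rewrite ?mulr1 //; exact: okG_one | exact: aug_one]. Qed.

Lemma U1_inv (u : R) : U1 u -> exists2 v, U1 v & u * v = 1 /\ v * u = 1.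
Proof.
case=> hu [v hv [e1 e2]] au; exists v => //; split=> //.
  by exists u.
by have := aug_mul u v; rewrite e1 aug_one au mul1r.
Qed.


Lemma scale_intG (hK : \dim (fullv : {vspace K}) = 2%N) (u : R) :
  exists m : nat, (0 < m)%N /\ in_OK_G ((m%:R : K) *: u).
Proof.
have hd : forall x : gT, exists d : nat, (0 < d)%N /\ algebraic_integer (d%:R * u x).
  by move=> x; apply: scale_int.
pose df x := proj1_sig (constructive_indefinite_description _ (hd x)).
have hdf : forall x, (0 < df x)%N /\ algebraic_integer ((df x)%:R * u x).
  by move=> x; exact: (proj2_sig (constructive_indefinite_description _ (hd x))).
exists (\prod_(x : gT) df x)%N; split.
  by apply: prodn_gt0 => x; case: (hdf x).
move=> x; rewrite grscaleE (bigD1 x) //= natrM [X in X * _]mulrC -mulrA.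
by apply: ai_mul; [exact: ai_nat | case: (hdf x)].
Qed.

Lemma pair_mul (B : nzRingType) (a c : 'M[K]_2) (b d : B) :
  ((a, b) * (c, d) : ('M[K]_2 * B)%type) = (a * c, b * d).
Proof. by []. Qed.


Lemma Z2_main (hK : \dim (fullv : {vspace K}) = 2%N) :
  is_Wedderburn_component_Mn R 1 -> Z2_embeds_in (@U1 K gT).
Proof.
case=> B [f [[g fg gf] flin fmon]].
have fD : forall u v, f (u + v) = f u + f v.
  by move=> u v; have := flin 1 u v; rewrite !scale1r.
have f0 : f 0 = 0 by apply/(addrI (f 0)); rewrite -fD !addr0.
have fZ : forall k u, f (k *: u) = k *: f u.
  by move=> k u; have := flin k u 0; rewrite !addr0 f0 addr0.
have fM : forall u v, f (u * v) = f u * f v by move=> u v; apply: fmon.2.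
have gD : forall a b, g (a + b) = g a + g b.
  by move=> a b; apply: (can_inj fg); rewrite fD !gf.
have gZ : forall k a, g (k *: a) = k *: g a.
  by move=> k a; apply: (can_inj fg); rewrite fZ !gf.
have gM : forall a b, g (a * b) = g a * g b.
  by move=> a b; apply: (can_inj fg); rewrite fM !gf.
have g0 : g 0 = 0 by rewrite -(scale0r (0 : ('M[K]_2 * B)%type)) gZ scale0r.
pose E : ('M[K]_2 * B)%type := (delta_mx 0 1, 0).
pose Zm v := g (v *: E).
have ZmD : forall v w, Zm (v + w) = Zm v + Zm w by move=> v w; rewrite /Zm scalerDl gD.
have ZmZ : forall k v, Zm (k * v) = k *: Zm v by move=> k v; rewrite /Zm -scalerA gZ.
have ZmM : forall v w, Zm v * Zm w = 0.
  move=> v w; rewrite /Zm -gM -g0; congr g.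
  have -> : v *: E = (v *: delta_mx 0 1, v *: 0) by [].
  have -> : w *: E = (w *: delta_mx 0 1, w *: 0) by [].
  rewrite pair_mul !scaler0 mulr0; congr pair.
  by rewrite -scalerAl -scalerAr -mulmxE mul_delta_mx_cond /= mulr0n !scaler0.
have Zm_inj : injective Zm.
  move=> v w /(congr1 f); rewrite !gf => /(congr1 (fun z : ('M[K]_2 * B)%type => z.1 0 1)) /=.
  by rewrite !mxE /= !mulr1.
have [be hbe] := exists_irr hK.
have [m1 [hm1 hX]] := scale_intG hK (Zm 1).
have [m2 [hm2 hY]] := scale_intG hK (Zm be).
pose c1 : K := m1%:R; pose c2 : K := m2%:R * be.
have hX' : in_OK_G (Zm c1) by rewrite /c1 -[m1%:R]mulr1 ZmZ.
have hY' : in_OK_G (Zm c2) by rewrite /c2 ZmZ.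
pose Nf (x : (int * int)%type) := Zm (x.1%:~R * c1 + x.2%:~R * c2).
have okN : forall x, in_OK_G (Nf x).
  move=> x; rewrite /Nf ZmD !ZmZ.
  by apply: okG_add; apply: okG_scale => //; apply: ai_int.
have NN : forall x y, Nf x * Nf y = 0 by move=> x y; apply: ZmM.
have augN : forall x, augmentation (Nf x) = 0.
  move=> x; have := aug_mul (Nf x) (Nf x); rewrite NN aug_zero.
  by move/esym/eqP; rewrite mulf_eq0 orbb => /eqP.
have indep : forall x z : int, x%:~R * c1 + z%:~R * c2 = 0 -> x = 0 /\ z = 0.
  move=> x z; rewrite /c1 /c2.
  have -> : (x%:~R * m1%:R : K) = in_alg K (x%:~R * m1%:R).
    by rewrite rmorphM rmorph_int rmorph_nat.
  have -> : (z%:~R * (m2%:R * be) : K) = in_alg K (z%:~R * m2%:R) * be.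
    by rewrite rmorphM rmorph_int rmorph_nat mulrA.
  set r := (x%:~R * m1%:R : rat); set s := (z%:~R * m2%:R : rat) => e.
  have hs : s = 0.
    apply: NNPP => /eqP hs; move/negP: hbe; apply.
    apply/vlineP; exists (- r / s).
    have hs' : in_alg K s != 0 by rewrite fmorph_eq0.
    change (be = in_alg K (- r / s)).
    apply: (mulfI hs'); rewrite -rmorphM [s * _]mulrC divfK // rmorphN.
    by apply/eqP; rewrite -addr_eq0 addrC e.
  move: e; rewrite hs rmorph0 mul0r addr0 => /eqP; rewrite fmorph_eq0.
  move: hs => /eqP; rewrite /r /s !mulf_eq0 !intr_eq0 !pnatr_eq0 !eqn0Ngt hm1 hm2 /= !orbF.
  by move=> /eqP -> /eqP ->.
exists (fun x => 1 + Nf x); split.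
- move=> [a b] [a' b'] /addrI; rewrite /Nf => /Zm_inj /eqP; rewrite -subr_eq0 /=.
  have -> : a%:~R * c1 + b%:~R * c2 - (a'%:~R * c1 + b'%:~R * c2) =
            (a - a')%:~R * c1 + (b - b')%:~R * c2 by rewrite !intrB; ring.
  by move/eqP/indep => [/eqP ha /eqP hb]; move: ha hb; rewrite !subr_eq0 => /eqP -> /eqP ->.
- move=> x; split.
  + by apply: okG_add; [apply: okG_one | apply: okN].
  + exists (1 - Nf x); first by apply: okG_add; [apply: okG_one | apply: okG_opp].
    split; first by rewrite mulrDl mul1r mulrBr mulr1 NN subr0 subrK.
    by rewrite mulrBl mul1r mulrDr mulr1 NN addr0 addrK.
  + by rewrite aug_add aug_one augN addr0.
move=> [a b] [a' b'].
have -> : Nf ((a, b) + (a', b')) = Nf (a, b) + Nf (a', b').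
  rewrite /Nf -ZmD; congr Zm.
  change ((a, b) + (a', b')) with (a + a', b + b'); rewrite /= !intrD; ring.
by rewrite mulrDl !mulrDr !mul1r mulr1 NN addr0 -addrA [Nf (a', b') + _]addrC.
Qed.
End GR.

Theorem mainTheorem12 (gT : finGroupType) (K : fieldExtType rat)
  (hK : \dim (fullv : {vspace K}) = 2%N) :
  is_Wedderburn_component_Mn (group_ring K gT) 1 ->
  Z2_embeds_in (@U1 K gT) /\ ~ hyperbolic (@U1 K gT).
Proof.
move=> hW; have hZ := Z2_main hK hW; split => //.
case=> S [hS hSinv hgen [delta h4]].
have [phi [pinj pH pD]] := hZ.
have hmul : forall x y : group_ring K gT, U1 x -> U1 y -> U1 (x * y) by apply: U1_mul.
have hone : U1 (1 : group_ring K gT) by apply: U1_one.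
have hinv : forall x : group_ring K gT, U1 x -> exists2 y, U1 y & x * y = 1 /\ y * x = 1
  by apply: U1_inv.
exact: (@noZ2 (group_ring K gT) (@U1 K gT) S hmul hone hinv hS hSinv hgen delta h4 phi pinj pH pD).
Qed.
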